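(* Let $F$ be a field and let $A$ be a unital $F$-algebra without zero divisors which is either flexible or quadratic. Then $A$ is von-Neumann finite.
   Context: An $F$-algebra is a vector space with a bilinear, not necessarily associative, multiplication; unital means it has a two-sided identity $1$. $A$ has no zero divisors if $ab=0$ implies $a=0$ or $b=0$. $A$ is flexible if $a(ba)=(ab)a$ for all $a,b\in A$. $A$ is quadratic if it is unital and $1,a,a^2$ are linearly dependent for every $a\in A$. $A$ is von-Neumann finite if $ab=1$ implies $ba=1$ for all $a,b\in A$. *)

(* Defs.v *)
From mathcomp Require Import all_boot all_algebra.
Set Implicit Arguments. Unset Strict Implicit. Unset Printing Implicit Defensive.
Import GRing.Theory.
Local Open Scope ring_scope.

(* A (not necessarily associative) F-algebra: an F-vector space V with a
   bilinear multiplication [mul]. *)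
Definition bilinear_mul (F : fieldType) (V : lmodType F) (mul : V -> V -> V) : Prop :=
  (forall (k : F) (a b c : V), mul (k *: a + b) c = k *: mul a c + mul b c) /\
  (forall (k : F) (a b c : V), mul a (k *: b + c) = k *: mul a b + mul a c).

Definition is_unit_elt (F : fieldType) (V : lmodType F) (mul : V -> V -> V) (one : V) : Prop :=
  forall a : V, mul one a = a /\ mul a one = a.

Definition no_zero_divisors (F : fieldType) (V : lmodType F) (mul : V -> V -> V) : Prop :=
  forall a b : V, mul a b = 0 -> a = 0 \/ b = 0.

Definition flexible (F : fieldType) (V : lmodType F) (mul : V -> V -> V) : Prop :=
  forall a b : V, mul a (mul b a) = mul (mul a b) a.

Definition quadratic (F : fieldType) (V : lmodType F) (mul : V -> V -> V) (one : V) : Prop :=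
  forall a : V, exists c0 c1 c2 : F,
    [\/ c0 != 0, c1 != 0 | c2 != 0] /\
    c0 *: one + c1 *: a + c2 *: mul a a = 0.

Definition vN_finite (F : fieldType) (V : lmodType F) (mul : V -> V -> V) (one : V) : Prop :=
  forall a b : V, mul a b = one -> mul b a = one.

(* Main.v *)
Require Import Defs.
From mathcomp Require Import all_boot all_algebra.
Set Implicit Arguments. Unset Strict Implicit. Unset Printing Implicit Defensive.
Import GRing.Theory.
Local Open Scope ring_scope.

Section Aux.
Variables (F : fieldType) (V : lmodType F) (mul : V -> V -> V).
Hypothesis Hb : bilinear_mul mul.

Lemma mulDl' a b c : mul (a + b) c = mul a c + mul b c.
Proof. by have := (Hb.1 1 a b c); rewrite !scale1r. Qed.
Lemma mulDr' a b c : mul a (b + c) = mul a b + mul a c.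
Proof. by have := (Hb.2 1 a b c); rewrite !scale1r. Qed.
Lemma mul0l' c : mul 0 c = 0.
Proof. have h := mulDl' 0 0 c; rewrite addr0 in h. by apply: (addrI (mul 0 c)); rewrite addr0 -h. Qed.
Lemma mul0r' c : mul c 0 = 0.
Proof. have h := mulDr' c 0 0; rewrite addr0 in h. by apply: (addrI (mul c 0)); rewrite addr0 -h. Qed.
Lemma mulZl' k a c : mul (k *: a) c = k *: mul a c.
Proof. by have := (Hb.1 k a 0 c); rewrite !addr0 mul0l' addr0. Qed.
Lemma mulZr' k a c : mul a (k *: c) = k *: mul a c.
Proof. by have := (Hb.2 k a c 0); rewrite !addr0 mul0r' addr0. Qed.
Lemma mulNl' a c : mul (- a) c = - mul a c.
Proof. by rewrite -scaleN1r mulZl' scaleN1r. Qed.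
Lemma mulNr' a c : mul a (- c) = - mul a c.
Proof. by rewrite -scaleN1r mulZr' scaleN1r. Qed.
Lemma mulBl' a b c : mul (a - b) c = mul a c - mul b c.
Proof. by rewrite mulDl' mulNl'. Qed.
Lemma mulBr' a b c : mul a (b - c) = mul a b - mul a c.
Proof. by rewrite mulDr' mulNr'. Qed.
End Aux.

Theorem proposition4p3 (F : fieldType) (V : lmodType F) (mul : V -> V -> V) (one : V) :
  bilinear_mul mul -> is_unit_elt mul one -> no_zero_divisors mul ->
  (flexible mul \/ quadratic mul one) ->
  vN_finite mul one.
Proof.
move=> Hb Hu Hz Hfq a b hab.
have [one0|one_n0] := eqVneq one 0.
  have all0 : forall x : V, x = 0 by move=> x; rewrite -(Hu x).1 one0 (mul0l' Hb).
  by rewrite (all0 (mul b a)) (all0 one).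
have a_n0 : a != 0.
  by apply/eqP => a0; move: hab; rewrite a0 (mul0l' Hb) => /esym/eqP; rewrite (negPf one_n0).
have scal : forall k : F, a = k *: one -> mul b a = one.
  move=> k ha; move: hab; rewrite ha; rewrite (mulZl' Hb) (mulZr' Hb) (Hu b).1 (Hu b).2 //.
have cancel : forall x y, mul a x = mul a y -> x = y.
  move=> x y hxy; have := Hz a (x - y); rewrite (mulBr' Hb) hxy subrr => /(_ erefl).
  by case=> [/eqP|/eqP]; [rewrite (negPf a_n0) | rewrite subr_eq0 => /eqP].
case: Hfq => [Hf|Hq].
  have : mul a (mul b a) = mul a one by rewrite Hf hab (Hu a).1 (Hu a).2.
  by move/cancel.
have [c0 [c1 [c2 [Hnz Heq]]]] := Hq a.
have [c20|c2n0] := eqVneq c2 0.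
  move: Heq; rewrite c20 scale0r addr0.
  have [c10|c1n0] := eqVneq c1 0.
    rewrite c10 scale0r addr0 => /eqP; rewrite scaler_eq0 (negPf one_n0) orbF => c00.
    by move: Hnz; rewrite c00 c10 c20 eqxx; case.
  move=> h; apply: (scal (- c0 / c1)).
  have h2 : a = c1^-1 *: (c1 *: a) by rewrite scalerA mulVf // scale1r.
  rewrite h2 (_ : c1 *: a = - (c0 *: one)); last first.
    by apply/eqP; rewrite -addr_eq0 addrC h.
  by rewrite scalerN scalerA -scaleNr mulNr mulrC.
set al := - c1 / c2; set be := - c0 / c2.
have Ha2 : mul a a = al *: a + be *: one.
  have h2 : mul a a = c2^-1 *: (c2 *: mul a a) by rewrite scalerA mulVf // scale1r.
  rewrite h2 (_ : c2 *: mul a a = - (c0 *: one + c1 *: a)); last first.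
    apply/eqP; rewrite -addr_eq0 addrC; apply/eqP. done.
  rewrite /al /be scalerN scalerDr !scalerA opprD addrC -!scaleNr.
  by rewrite !mulNr [c2^-1 * c1]mulrC [c2^-1 * c0]mulrC.
set d := a - al *: one.
have Hd1 : mul a d = be *: one.
  by rewrite /d (mulBr' Hb) (mulZr' Hb) (Hu a).2 Ha2 addrAC subrr add0r.
have Hd2 : mul d a = be *: one.
  by rewrite /d (mulBl' Hb) (mulZl' Hb) (Hu a).1 Ha2 addrAC subrr add0r.
have [be0|ben0] := eqVneq be 0.
  move: Hd1; rewrite be0 scale0r => Hd.
  have := Hz _ _ Hd; case=> [a0|d0]; first by move: a_n0; rewrite a0 eqxx.
  by apply: (scal al); apply/eqP; rewrite -subr_eq0 -/d d0.
have hbc : b = be^-1 *: d.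
  apply: cancel; rewrite hab (mulZr' Hb) Hd1 scalerA mulVf // scale1r //.
by rewrite hbc (mulZl' Hb) Hd2 scalerA mulVf // scale1r.
Qed.
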